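(* Let $F=(V,E)$ be a forest whose vertices are colored with $k\ge 2$ colors in a ratio $c_1:c_2:\dots:c_k$, where $c_i\in\mathbb{N}_{>0}$ for all $i\in[k]$, $\gcd(c_1,\dots,c_k)=1$ and $\sum_{i=1}^k c_i\ge 3$. Then every set of every minimum-cost fair clustering of $F$ has exactly $d=\sum_{i=1}^k c_i$ vertices.
   Context: All graphs are finite, simple and undirected. For a graph $G=(V,E)$ and a partition $\mathcal{P}$ of $V$, write $\mathcal{P}[u]$ for the set of $\mathcal{P}$ containing $u$. The cost is $$\mathrm{cost}(G,\mathcal{P})=\Big|\Big\{\{u,v\}\in\tbinom{V}{2}\setminus E : \mathcal{P}[u]=\mathcal{P}[v]\Big\}\Big|+\Big|\Big\{\{u,v\}\in E:\mathcal{P}[u]\neq\mathcal{P}[v]\Big\}\Big|.$$ A coloring is a map $c:V\to[k]$; let $V_i=c^{-1}(i)$. A set $S\subseteq V$ is fair if $|S\cap V_i|/|S|=|V_i|/|V|$ for every $i\in[k]$. A fair clustering is a partition of $V$ all of whose sets are fair; it is minimum-cost if no fair clustering has smaller cost. The colors are in ratio $c_1:\dots:c_k$ (positive integers) if there is $t\in\mathbb{N}_{>0}$ with $|V_i|=t\,c_i$ for all $i\in[k]$. *)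

(* Defs.v *)
From mathcomp Require Import all_boot.
Set Implicit Arguments. Unset Strict Implicit. Unset Printing Implicit Defensive.

Definition simple_graph (T : finType) (e : rel T) : Prop :=
  symmetric e /\ irreflexive e.

(* A cycle is a duplicate-free cyclic sequence of
   vertices v_0 ... v_{m-1} with m >= 3 and consecutive vertices (cyclically)
   adjacent. (Sequences of size <= 2 are not cycles in a simple graph.) *)
Definition forest (T : finType) (e : rel T) : Prop :=
  forall s : seq T, uniq s -> cycle e s -> size s <= 2.

Definition same_cluster (T : finType) (P : {set {set T}}) (u v : T) : bool :=
  pblock P u == pblock P v.

(* cost(G,P): number of unordered pairs {u,v} that are non-edges inside a
   cluster or edges between clusters. *)
Definition cost (T : finType) (e : rel T) (P : {set {set T}}) : nat :=
  #|[set p : {set T} | [exists u : T, exists v : T,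
       [&& u != v, p == [set u; v] & same_cluster P u v != e u v]]]|.

Definition color_class (T : finType) (k : nat) (col : T -> 'I_k) (i : 'I_k)
  : {set T} := [set x | col x == i].

(* S is fair: |S ∩ V_i| / |S| = |V_i| / |V| for all i (cross-multiplied;
   here S is nonempty and V nonempty in all uses). *)
Definition fair (T : finType) (k : nat) (col : T -> 'I_k) (S : {set T}) : bool :=
  [forall i : 'I_k, #|S :&: color_class col i| * #|T| == #|color_class col i| * #|S|].

Definition fair_clustering (T : finType) (k : nat) (col : T -> 'I_k)
  (P : {set {set T}}) : Prop :=
  partition P [set: T] /\ forall S, S \in P -> fair col S.

Definition min_cost_fair_clustering (T : finType) (e : rel T) (k : nat)
  (col : T -> 'I_k) (P : {set {set T}}) : Prop :=
  fair_clustering col P /\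
  forall Q, fair_clustering col Q -> cost e P <= cost e Q.

Definition in_ratio (T : finType) (k : nat) (col : T -> 'I_k) (c : 'I_k -> nat)
  : Prop :=
  exists2 t, 0 < t & forall i, #|color_class col i| = t * c i.

(* Main.v *)
Require Import Defs.
From mathcomp Require Import all_boot zify.
Set Implicit Arguments. Unset Strict Implicit. Unset Printing Implicit Defensive.

Definition ecount (T : finType) (e : rel T) (U W : {set T}) : nat :=
  \sum_(u in U) \sum_(w in W) (e u w : nat).

Lemma ecountUl (T : finType) (e : rel T) (U1 U2 W : {set T}) :
  [disjoint U1 & U2] -> ecount e (U1 :|: U2) W = ecount e U1 W + ecount e U2 W.
Proof.
move=> dU; rewrite /ecount -bigU //=; apply: eq_bigl => x; by rewrite !inE.
Qed.

Lemma ecountUr (T : finType) (e : rel T) (U W1 W2 : {set T}) :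
  [disjoint W1 & W2] -> ecount e U (W1 :|: W2) = ecount e U W1 + ecount e U W2.
Proof.
move=> dW; rewrite /ecount -big_split /=; apply: eq_bigr => u _.
rewrite -bigU //=; apply: eq_bigl => x; by rewrite !inE.
Qed.

Lemma ecountC (T : finType) (e : rel T) (U W : {set T}) :
  symmetric e -> ecount e U W = ecount e W U.
Proof.
move=> se; rewrite /ecount exchange_big /=; apply: eq_bigr => w _.
apply: eq_bigr => u _; by rewrite se.
Qed.

Lemma ecount0l (T : finType) (e : rel T) (W : {set T}) : ecount e set0 W = 0.
Proof. by rewrite /ecount big_set0. Qed.

Lemma ecount1l (T : finType) (e : rel T) (x : T) (W : {set T}) :
  ecount e [set x] W = \sum_(w in W) (e x w : nat).
Proof. by rewrite /ecount big_set1. Qed.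

Lemma ecount11 (T : finType) (e : rel T) (x y : T) :
  ecount e [set x] [set y] = e x y.
Proof. by rewrite ecount1l big_set1. Qed.

Lemma sum_deg (T : finType) (e : rel T) (x : T) (W : {set T}) :
  \sum_(w in W) (e x w : nat) = #|[set w in W | e x w]|.
Proof.
rewrite -sum1_card [LHS]big_mkcond [RHS]big_mkcond /=.
apply: eq_bigr => w _; rewrite !inE; by case: (w \in W); case: (e x w).
Qed.

Lemma last_drop_nth (T : Type) (x0 : T) (s : seq T) i :
  i < size s -> last (nth x0 s i) (drop i.+1 s) = last x0 s.
Proof.
elim: s i => [|a l IH] [|i] //= Hi.
  by rewrite drop0.
rewrite IH //; case: l IH Hi => //.
Qed.

Lemma leaf_exists (T : finType) (e : rel T) :
  simple_graph e -> forest e -> forall U : {set T}, U != set0 ->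
  exists2 x, x \in U & #|[set y in U | e x y]| <= 1.
Proof.
move=> [se ie] fe U /set0Pn [x0 x0U].
pose Pn n := [exists s : n.-tuple T, [&& uniq s, all (mem U) s & sorted e s]].
have Pn1 : Pn 1.
  apply/existsP; exists [tuple x0] => /=; by rewrite x0U.
have PnB : forall n, Pn n -> n <= #|T|.
  move=> n /existsP [s /and3P [us _ _]].
  by rewrite -(size_tuple s) -(card_uniqP us) max_card.
have exP : exists n, Pn n by exists 1.
case: (ex_maxnP exP PnB) => N /existsP [[s /eqP sz] /and3P /= [us aU ss]] maxN.
have N1 : 1 <= N by apply: maxN.
have xs : last x0 s \in s.
  case: s sz {us aU ss maxN} => [|a l] /= sz; first by rewrite -sz in N1.
  exact: mem_last.
pose x := last x0 s.
exists x; first by move/allP: aU; apply.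
rewrite leqNgt; apply/negP => /card_gt1P [y [z [yN zN yz]]].
move: yN zN; rewrite !inE => /andP [yU exy] /andP [zU exz].
have inS : forall w, w \in U -> e x w -> w \in s.
  move=> w wU exw; apply/negPn/negP => ws.
  have : Pn N.+1.
    apply/existsP.
    have szr : size (rcons s w) == N.+1 by rewrite size_rcons sz.
    exists (Tuple szr) => /=.
    rewrite rcons_uniq ws us all_rcons aU andbT /=.
    apply/andP; split; first by rewrite andbT; exact: wU.
    move: exw ss; rewrite /x; clear.
    case: s => [|a l] //= exw ss.
    by rewrite rcons_path ss.
  by move/maxN; rewrite ltnn.
have ys := inS y yU exy; have zs := inS z zU exz.
have idxN : forall w, w \in s -> w != x -> index w s < N.-1.
  move=> w ws wx; have : index w s < N by rewrite -sz index_mem.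
  rewrite leq_eqVlt => /orP [/eqP H|]; last by move=> H; clear -H; lia.
  have : nth x0 s (index w s) = x.
    have -> : index w s = (size s).-1 by rewrite sz; clear -H; lia.
    by rewrite nth_last.
  by rewrite nth_index // => E; rewrite E eqxx in wx.
have yx : y != x by apply/negP => /eqP E; rewrite E ie in exy.
have zx : z != x by apply/negP => /eqP E; rewrite E ie in exz.
have iy := idxN y ys yx; have iz := idxN z zs zx.
have iyz : index y s != index z s.
  apply/negP => /eqP E; have := nth_index x0 ys; rewrite E nth_index // => E2.
  by rewrite E2 eqxx in yz.
have [w [ws exw iw]] : exists w, [/\ w \in s, e x w & index w s < N.-2].
  case: (ltnP (index y s) N.-2) => Hy; first by exists y.
  exists z; split => //; clear -Hy iz iy iyz; lia.
set i := index w s.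
have cyc : cycle e (drop i s).
  rewrite (drop_nth x0); last by rewrite sz; clear -iw; lia.
  have sd := drop_sorted i ss.
  rewrite (drop_nth x0) ?sz in sd; last by clear -iw; lia.
  have lw := @last_drop_nth T x0 s i.
  rewrite nth_index // in sd lw *.
  rewrite /= rcons_path; move: sd => /= ->; rewrite lw; last by rewrite sz; clear -iw; lia.
  exact: exw.
have := fe _ (drop_uniq i us) cyc.
rewrite size_drop sz; clear -iw; lia.
Qed.

Lemma ecount_self1 (T : finType) (e : rel T) (x : T) :
  irreflexive e -> ecount e [set x] [set x] = 0.
Proof. by move=> ie; rewrite ecount11 ie. Qed.

Lemma forest_bound (T : finType) (e : rel T) :
  simple_graph e -> forest e -> forall U : {set T}, U != set0 ->
  ecount e U U + 2 <= 2 * #|U|.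
Proof.
move=> sg fe; have [se ie] := sg.
suff H : forall n (U : {set T}), #|U| = n.+1 -> ecount e U U + 2 <= 2 * #|U|.
  move=> U /set0Pn [x xU]; apply: (H #|U|.-1); rewrite prednK //.
  by apply/card_gt0P; exists x.
elim=> [|n IH] U cU.
  have [x Ux] := cards1P (introT eqP cU); rewrite Ux ecount_self1 // cards1.
  done.
have U0 : U != set0 by rewrite -card_gt0 cU.
have [x xU dx] := leaf_exists sg fe U0.
set U' := U :\ x.
have UE : U = [set x] :|: U' by rewrite setD1K.
have dj : [disjoint [set x] & U'] by rewrite disjoints1 !inE eqxx.
have cU' : #|U'| = n.+1 by move: cU; rewrite (cardsD1 x U) xU add1n => -[].
have le1 : ecount e [set x] U' <= 1.
  rewrite ecount1l sum_deg; apply: leq_trans dx; apply: subset_leq_card.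
  by apply/subsetP => y; rewrite !inE => /andP [/andP [_ ->] ->].
have IH' := IH U' cU'.
rewrite {1 2}UE ecountUl // !ecountUr // ecount_self1 // (ecountC U' [set x] se).
rewrite cU cU' in IH' *.
lia.
Qed.

Lemma set2_inv (T : finType) (a b u v : T) :
  [set a; b] = [set u; v] -> u != v -> (a == u) && (b == v) || (a == v) && (b == u).
Proof.
move=> E uv.
have : u \in [set a; b] by rewrite E !inE eqxx.
have : v \in [set a; b] by rewrite E !inE eqxx orbT.
rewrite !inE => /orP [/eqP va|/eqP vb] /orP [/eqP ua|/eqP ub].
- by subst; rewrite eqxx in uv.
- by subst; rewrite !eqxx orbT.
- by subst; rewrite !eqxx.
- by subst; rewrite eqxx in uv.
Qed.

Lemma count_pairs (T : finType) (R : rel T) : symmetric R ->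
  #|[set p : {set T} | [exists u : T, exists v : T,
       [&& u != v, p == [set u; v] & R u v]]]| * 2 =
  \sum_(u : T) \sum_(v : T) ((u != v) && R u v : nat).
Proof.
move=> sR.
pose O := [set q : T * T | (q.1 != q.2) && R q.1 q.2].
pose h := fun q : T * T => [set q.1; q.2].
have -> : [set p : {set T} | [exists u : T, exists v : T,
       [&& u != v, p == [set u; v] & R u v]]] = h @: O.
  apply/setP => p; rewrite inE; apply/existsP/imsetP.
    move=> [u /existsP [v /and3P [uv /eqP -> Ruv]]].
    by exists (u, v); rewrite // inE /= uv Ruv.
  move=> [[u v]]; rewrite inE /= => /andP [uv Ruv] ->.
  by exists u; apply/existsP; exists v; rewrite uv eqxx Ruv.
rewrite pair_big /= -[RHS]big_mkcond /=.
have -> : \sum_(q : T * T | (q.1 != q.2) && R q.1 q.2) 1 = \sum_(q in O) 1.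
  by apply: eq_bigl => q; rewrite inE.
rewrite (partition_big_imset h) /= -sum_nat_const.
apply: eq_bigr => p /imsetP [[u v]]; rewrite inE /= => /andP [uv Ruv] ->.
rewrite sum1_card.
have -> : #|(fun i : T * T => (i \in O) && (h i == h (u, v)))| = #|[set (u, v); (v, u)]|.
  apply: eq_card => -[a b]; rewrite !inE /= /h /=.
  apply/andP/orP; rewrite /= inE /=.
    move=> [/andP [ab Rab] /eqP E]; have := set2_inv E uv.
    by case/orP => /andP [/eqP -> /eqP ->]; [left|right].
  case=> /eqP [-> ->]; first by rewrite uv Ruv eqxx.
  by rewrite eq_sym uv sR Ruv setUC eqxx.
rewrite cards2.
suff : (u, v) != (v, u) by move=> ->.
apply/negP => /eqP [E]; by rewrite E eqxx in uv.
Qed.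

Lemma split_partition (T : finType) (P : {set {set T}}) (S A : {set T}) :
  partition P [set: T] -> S \in P -> A \subset S -> A != set0 -> S :\: A != set0 ->
  partition ((P :\ S) :|: [set A; S :\: A]) [set: T].
Proof.
move=> /and3P [/eqP cP tP P0] SP AS A0 B0.
set B := S :\: A.
have dAB : [disjoint A & B].
  by rewrite -setI_eq0; apply/eqP/setP => x; rewrite !inE; case: (x \in A); rewrite ?andbF.
have BS : B \subset S by apply: subsetDl.
have dPS : forall X, X \in P -> X != S -> [disjoint X & S].
  by move=> X XP XS; move/trivIsetP: tP; apply.
apply/and3P; split.
- apply/eqP/setP => x; rewrite inE; apply/bigcupP.
  have xc : x \in cover P by rewrite cP.
  case: (eqVneq (pblock P x) S) => E.
    have xS : x \in S by rewrite -E mem_pblock.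
    case xA : (x \in A).
      by exists A; rewrite // !inE eqxx orbT.
    exists B; first by rewrite !inE eqxx !orbT.
    by rewrite /B !inE xA xS.
  exists (pblock P x); last by rewrite mem_pblock.
  by rewrite !inE E pblock_mem.
- apply/trivIsetP => X Y; rewrite !inE.
  move=> /orP [/andP [XS XP]|/orP [/eqP->|/eqP->]] /orP [/andP [YS YP]|/orP [/eqP->|/eqP->]] XY.
  + by move/trivIsetP: tP; apply.
  + by apply: disjointWr AS _; apply: dPS.
  + by apply: disjointWr BS _; apply: dPS.
  + by rewrite disjoint_sym; apply: disjointWr AS _; apply: dPS.
  + by rewrite eqxx in XY.
  + done.
  + by rewrite disjoint_sym; apply: disjointWr BS _; apply: dPS.
  + by rewrite disjoint_sym.
  + by rewrite eqxx in XY.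
- rewrite !inE negb_or !negb_or !(eq_sym set0) A0 B0 !andbT.
  by apply/negP => /andP [_ H]; rewrite H in P0.
Qed.

Lemma cost2 (T : finType) (e : rel T) (Q : {set {set T}}) : symmetric e ->
  2 * cost e Q = \sum_(u : T) \sum_(v : T)
     ((u != v) && (same_cluster Q u v != e u v) : nat).
Proof.
move=> se; rewrite /cost mulnC.
apply: (count_pairs (R := fun u v => same_cluster Q u v != e u v)).
by move=> u v /=; rewrite /same_cluster [pblock Q u == _]eq_sym se.
Qed.

Lemma sum_ecount (T : finType) (r : rel T) (U W : {set T}) :
  \sum_(u : T) \sum_(v : T) ((u \in U) && (v \in W) && r u v : nat) = ecount r U W.
Proof.
rewrite /ecount [RHS]big_mkcond /=; apply: eq_bigr => u _.
case: (u \in U) => /=; last by rewrite big1.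
by rewrite [RHS]big_mkcond /=; apply: eq_bigr => v _; case: (v \in W).
Qed.

Lemma ecount_compl (T : finType) (r : rel T) (U W : {set T}) :
  ecount r U W + ecount (fun u v => ~~ r u v) U W = #|U| * #|W|.
Proof.
rewrite /ecount -big_split /= -sum1_card big_distrl /=; apply: eq_bigr => u _.
rewrite -big_split /= mul1n -sum1_card; apply: eq_bigr => v _; by case: (r u v).
Qed.

Lemma split_cost (T : finType) (e : rel T) (P : {set {set T}}) (S A : {set T}) :
  symmetric e -> partition P [set: T] -> S \in P -> A \subset S -> A != set0 ->
  S :\: A != set0 ->
  cost e ((P :\ S) :|: [set A; S :\: A]) + #|A| * #|S :\: A| =
  cost e P + 2 * ecount e A (S :\: A).
Proof.
move=> se hP SP AS A0 B0.
have hQ := split_partition hP SP AS A0 B0.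
set B := S :\: A in hQ B0 *.
set Q := (P :\ S) :|: [set A; B] in hQ *.
have /and3P [/eqP cP tP P0] := hP.
have /and3P [/eqP cQ tQ Q0] := hQ.
have hAB : forall x, x \in A -> x \in B -> False.
  by move=> x xA; rewrite !inE xA.
have hS : forall x, (x \in S) = (x \in A) || (x \in B).
  move=> x; rewrite !inE; case xA: (x \in A) => /=; last by [].
  by rewrite (subsetP AS).
have scE : forall (R : {set {set T}}) u v, partition R [set: T] ->
    same_cluster R u v = (v \in pblock R u).
  move=> R u v /and3P [/eqP cR tR _]; rewrite /same_cluster eq_pblock //.
  by rewrite cR inE.
have AQ : A \in Q by rewrite !inE eqxx orbT.
have BQ : B \in Q by rewrite !inE eqxx !orbT.
have scQ : forall u v, same_cluster Q u v =
    if u \in A then v \in A else if u \in B then v \in B else same_cluster P u v.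
  move=> u v; rewrite !scE //.
  case uA: (u \in A); first by rewrite (def_pblock tQ AQ uA).
  case uB: (u \in B); first by rewrite (def_pblock tQ BQ uB).
  have uS : u \notin S by rewrite hS uA uB.
  have uc : u \in cover P by rewrite cP inE.
  have XP := pblock_mem uc.
  have XQ : pblock P u \in Q.
    rewrite !inE XP andbT; apply/orP; left; apply/negP => /eqP E.
    by move: uS; rewrite -E mem_pblock uc.
  by rewrite (def_pblock tQ XQ) // mem_pblock.
have scP : forall u v, u \in S -> same_cluster P u v = (v \in S).
  by move=> u v uS; rewrite scE // (def_pblock tP SP uS).
have pt : forall u v,
  ((u != v) && (same_cluster Q u v != e u v) : nat)
  + ((u \in A) && (v \in B) && ~~ e u v : nat)
  + ((u \in B) && (v \in A) && ~~ e u v : nat) =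
  ((u != v) && (same_cluster P u v != e u v) : nat)
  + ((u \in A) && (v \in B) && e u v : nat)
  + ((u \in B) && (v \in A) && e u v : nat).
  move=> u v; rewrite scQ.
  case uA: (u \in A).
    rewrite scP ?hS ?uA //.
    case vA: (v \in A).
      have -> : (u \in B) = false by apply/negP; apply: hAB.
      have -> : (v \in B) = false by apply/negP; apply: hAB.
      by rewrite /= ?andbF ?addn0.
    case vB: (v \in B); last by rewrite /= ?andbF ?andbT.
    have uv : u != v by apply/eqP => E; subst; apply: (hAB v).
    have -> : (u \in B) = false by apply/negP; apply: hAB.
    by rewrite uv /=; case: (e u v).
  case uB: (u \in B).
    rewrite scP ?hS ?uA ?uB ?orbT //.
    case vB: (v \in B); first by have -> : (v \in A) = false by apply/negP => vA; apply: (hAB v).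
    case vA: (v \in A); last by rewrite /= ?andbF ?andbT.
    have uv : u != v by apply/eqP => E; subst; apply: (hAB v).
    by rewrite uv /=; case: (e u v).
  by rewrite /= !addn0.
pose ne := fun u v => ~~ e u v.
have sumE : 2 * cost e Q + ecount ne A B + ecount ne B A =
            2 * cost e P + ecount e A B + ecount e B A.
  rewrite !cost2 // -!sum_ecount -!big_split /=; apply: eq_bigr => u _.
  rewrite -!big_split /=; apply: eq_bigr => v _; exact: pt u v.
have sne : symmetric ne by move=> u v; rewrite /ne se.
rewrite (ecountC B A se) (ecountC B A sne) in sumE.
have := ecount_compl e A B.
rewrite -/ne; lia.
Qed.

Lemma card_colors (T : finType) (k : nat) (col : T -> 'I_k) (X : {set T}) :
  #|X| = \sum_(i < k) #|X :&: color_class col i|.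
Proof.
rewrite -sum1_card (partition_big col (fun _ => true)) //=.
apply: eq_bigr => i _; rewrite -sum1_card; apply: eq_bigl => x.
by rewrite !inE.
Qed.

Lemma biggcd_mul (k : nat) (c : 'I_k -> nat) (g : nat) :
  \big[gcdn/0]_(i < k) (c i * g) = (\big[gcdn/0]_(i < k) c i) * g.
Proof.
apply: esym; apply: (big_morph (fun x => x * g)) => //.
by move=> x y; rewrite muln_gcdl.
Qed.

Lemma fair_cnt (T : finType) (k : nat) (col : T -> 'I_k) (c : 'I_k -> nat) (t : nat) (X : {set T}) :
  0 < t -> (forall i, #|color_class col i| = t * c i) ->
  \big[gcdn/0]_(i < k) c i = 1 -> 0 < \sum_(i < k) c i ->
  X != set0 -> fair col X ->
  exists2 m, 0 < m & forall i, #|X :&: color_class col i| = m * c i.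
Proof.
move=> t0 hV g1 d0 X0 /forallP fX.
set d := \sum_(i < k) c i in d0.
have cT : #|T| = t * d.
  rewrite -cardsT (card_colors col) /d big_distrr /=; apply: eq_bigr => i _.
  by rewrite setTI hV.
have H : forall i, #|X :&: color_class col i| * d = c i * #|X|.
  move=> i; have /eqP := fX i; rewrite cT hV => E.
  apply/eqP; rewrite -(eqn_pmul2l t0); apply/eqP; move: E; clear; lia.
have dX : d %| #|X|.
  have : d %| \big[gcdn/0]_(i < k) (c i * #|X|).
    apply/dvdn_biggcdP => i _; apply/dvdnP; exists #|X :&: color_class col i|.
    by rewrite -H.
  by rewrite biggcd_mul g1 mul1n.
case/dvdnP: dX => m Em.
have X1 : 0 < #|X| by rewrite card_gt0.
exists m; first by move: X1; rewrite Em; clear; case: m.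
move=> i; have := H i; rewrite Em mulnA => /eqP; rewrite eqn_pmul2r // => /eqP ->.
by rewrite mulnC.
Qed.

Lemma cnt_fair (T : finType) (k : nat) (col : T -> 'I_k) (c : 'I_k -> nat) (t q : nat) (X : {set T}) :
  (forall i, #|color_class col i| = t * c i) ->
  (forall i, #|X :&: color_class col i| = q * c i) -> fair col X.
Proof.
move=> hV hX; apply/forallP => i.
rewrite -cardsT (card_colors col [set: T]) (card_colors col X) hV hX.
under eq_bigr do rewrite setTI hV.
under [X in _ == _ * X]eq_bigr do rewrite hX.
rewrite -!big_distrr /=; apply/eqP.
move: (\sum_(i0 < k) c i0) => s; clear; lia.
Qed.

Lemma pick_sub0 (T : finType) (X : {set T}) (n : nat) :
  n <= #|X| -> exists2 Y : {set T}, Y \subset X & #|Y| = n.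
Proof.
move=> nX; exists [set y in take n (enum X)].
  by apply/subsetP => y; rewrite inE => /mem_take; rewrite mem_enum.
have u : uniq (take n (enum X)) by rewrite take_uniq ?enum_uniq.
rewrite cardsE (card_uniqP u) size_take -cardE.
by case: ifP => //; move: nX; clear; lia.
Qed.

Lemma pick_sub (T : finType) (X : {set T}) (x : T) (n : nat) :
  x \in X -> 0 < n <= #|X| -> exists Y : {set T}, [/\ Y \subset X, x \in Y & #|Y| = n].
Proof.
move=> xX /andP [n0 nX].
have [Y0 Y0Z cY0] : exists2 Y0 : {set T}, Y0 \subset X :\ x & #|Y0| = n.-1.
  apply: pick_sub0; move: nX; rewrite (cardsD1 x X) xX; clear; lia.
exists (x |: Y0); split.
- rewrite subUset sub1set xX /=; apply: subset_trans Y0Z _; exact: subD1set.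
- by rewrite !inE eqxx.
- rewrite cardsU1 cY0.
  have -> : x \notin Y0 by apply/negP => /(subsetP Y0Z); rewrite !inE eqxx.
  by move: n0; clear; lia.
Qed.

Lemma fair_piece (T : finType) (k : nat) (col : T -> 'I_k) (c : 'I_k -> nat) (m : nat)
  (S : {set T}) (x : T) :
  (forall i, 0 < c i) -> 0 < m -> (forall i, #|S :&: color_class col i| = m * c i) ->
  x \in S -> exists A : {set T}, [/\ A \subset S, x \in A &
     forall i, #|A :&: color_class col i| = c i].
Proof.
move=> c0 m0 hS xS.
have : forall i : 'I_k, exists Y : {set T},
    (Y \subset S :&: color_class col i) && (#|Y| == c i) && ((col x == i) ==> (x \in Y)).
  move=> i; case: (eqVneq (col x) i) => cx.
    have xSi : x \in S :&: color_class col i by rewrite !inE xS /= ?cx ?eqxx.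
    have [|Y [YS xY cY]] := pick_sub (n := c i) xSi.
      by rewrite c0 hS leq_pmull.
    by exists Y; rewrite YS cY xY eqxx.
  have [|Y YS cY] := pick_sub0 (n := c i) (X := S :&: color_class col i).
    by rewrite hS leq_pmull.
  by exists Y; rewrite YS cY eqxx /= ?(negbTE cx).
case/fin_all_exists => Y hY.
exists (\bigcup_(i < k) Y i); split.
- apply/bigcupsP => i _; have /andP [/andP [YS _] _] := hY i.
  by apply: subset_trans YS _; apply: subsetIl.
- apply/bigcupP; exists (col x) => //.
  by have /andP [_ /implyP] := hY (col x); apply; rewrite eqxx.
- move=> i; have /andP [/andP [YS /eqP <-] _] := hY i; apply: eq_card => y.
  rewrite inE; apply/andP/idP.
    move=> [/bigcupP [j _ yj] yi].
    have /andP [/andP [YSj _] _] := hY j.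
    have := subsetP YSj y yj; rewrite !inE => /andP [_ /eqP cj].
    by move: yi; rewrite inE cj => /eqP ji; rewrite -ji.
  move=> yi; split; first by apply/bigcupP; exists i.
  by have := subsetP YS y yi; rewrite inE => /andP [].
Qed.

Lemma disjP' (T : finType) (U W : {set T}) :
  (forall x, x \in U -> x \in W -> False) -> [disjoint U & W].
Proof.
move=> H; rewrite -setI_eq0; apply/eqP/setP => x; rewrite !inE.
by apply/negbTE/negP => /andP [xU xW]; apply: (H x).
Qed.

Lemma ecount_sq (T : finType) (e : rel T) (U W : {set T}) : symmetric e ->
  [disjoint U & W] ->
  ecount e (U :|: W) (U :|: W) = ecount e U U + 2 * ecount e U W + ecount e W W.
Proof.
move=> se dUW; rewrite ecountUl // !ecountUr // (ecountC W U se); lia.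
Qed.

Lemma card_addI (T : finType) (x : T) (C V : {set T}) :
  x \notin C -> #|(x |: C) :&: V| = (x \in V) + #|C :&: V|.
Proof.
move=> xC; case xV: (x \in V).
  have -> : (x |: C) :&: V = x |: (C :&: V).
    apply/setP => y; rewrite !inE; case: (eqVneq y x) => [->|] //=; by rewrite xV.
  by rewrite cardsU1 inE (negbTE xC).
have -> : (x |: C) :&: V = C :&: V.
  apply/setP => y; rewrite !inE; case: (eqVneq y x) => [->|] //=; by rewrite xV (negbTE xC).
done.
Qed.

Lemma cardD_cnt (T : finType) (S A V : {set T}) : A \subset S ->
  #|(S :\: A) :&: V| = #|S :&: V| - #|A :&: V|.
Proof.
move=> AS; rewrite setIDAC cardsD.
have -> : (S :&: V) :&: A = A :&: V.
  apply/setP => x; rewrite !inE; case xA: (x \in A); rewrite ?andbF //=.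
  by rewrite (subsetP AS) // andbT.
done.
Qed.

Unset Implicit Arguments.

Theorem mainTheorem2 (T : finType) (e : rel T) (k : nat) (col : T -> 'I_k)
    (c : 'I_k -> nat) :
  simple_graph e -> forest e ->
  2 <= k ->
  (forall i, 0 < c i) ->
  \big[gcdn/0]_(i < k) c i = 1 ->
  3 <= \sum_(i < k) c i ->
  in_ratio col c ->
  forall P : {set {set T}}, min_cost_fair_clustering e col P ->
  forall S, S \in P -> #|S| = \sum_(i < k) c i.
Proof.
move=> sg fe k2 c0 g1 d3 [t t0 hV] P [[hP fP] minP] S SP.
have [se ie] := sg.
set d := \sum_(i < k) c i in d3 *.
have /and3P [/eqP cP tP P0] := hP.
have S0 : S != set0 by apply/negP => /eqP E; rewrite -E SP in P0.
have d0 : 0 < d by move: d3; clear; lia.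
have [m m0 hS] := fair_cnt t0 hV g1 d0 S0 (fP S SP).
have cardc : forall X : {set T}, forall q, (forall i, #|X :&: color_class col i| = q * c i) ->
    #|X| = q * d.
  move=> X q hX; rewrite (card_colors col) /d big_distrr /=.
  by apply: eq_bigr => i _; rewrite hX.
have cS := cardc S m hS.
suff m1 : m = 1 by rewrite cS m1 mul1n.
apply/eqP; rewrite eqn_leq m0 andbT leqNgt; apply/negP => m2.
have contra : forall A : {set T}, A \subset S -> (forall i, #|A :&: color_class col i| = c i) ->
    ~ (2 * ecount e A (S :\: A) < d * ((m - 1) * d)).
  move=> A AS cA lt.
  have cA' : forall i, #|A :&: color_class col i| = 1 * c i by move=> i; rewrite mul1n.
  have cB : forall i, #|(S :\: A) :&: color_class col i| = (m - 1) * c i.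
    by move=> i; rewrite cardD_cnt // hS cA mulnBl mul1n.
  have cAd := cardc A 1 cA'; have cBd := cardc _ _ cB.
  have A0 : A != set0 by rewrite -card_gt0 cAd; move: d3; clear; lia.
  have B0 : S :\: A != set0 by rewrite -card_gt0 cBd; move: d3 m2; clear; nia.
  have hQ := split_partition hP SP AS A0 B0.
  have fQ : fair_clustering col ((P :\ S) :|: [set A; S :\: A]).
    split => // X; rewrite !inE => /orP [/andP [_ XP]|/orP [/eqP ->|/eqP ->]].
    - exact: fP.
    - exact: cnt_fair hV cA'.
    - exact: cnt_fair hV cB.
  have := minP _ fQ.
  have := split_cost se hP SP AS A0 B0.
  rewrite cAd cBd mul1n; move: lt; move: (d * ((m - 1) * d)) (cost e P) (cost e (P :\ S :|: [set A; S :\: A])) (ecount e A (S :\: A)) => N x y z; clear; lia.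
have [a aS] : exists a, a \in S by apply/set0Pn.
have [A [AS aA cA]] := fair_piece c0 m0 hS aS.
have eAB : ecount e A (S :\: A) + 1 <= m * d.
  have SE : S = A :|: (S :\: A).
    apply/setP => x; rewrite !inE; case xA: (x \in A) => //=.
    by rewrite (subsetP AS).
  have := forest_bound sg fe S0.
  rewrite {1 2}SE ecount_sq //; last by apply: disjP' => x; rewrite !inE => ->.
  rewrite cS; clear; lia.
case: (boolP ((m == 2) && (d == 3))) => md; last first.
  apply: (contra A AS cA); move: eAB m2 d3 md; clear; nia.
case/andP: md => /eqP m2E /eqP d3E.
rewrite m2E d3E in eAB contra cS.
have [i0 ci0] : exists i0, c i0 = 1.
  case: (pickP (fun i => c i == 1)) => [i0 /eqP E|H]; first by exists i0.
  have : \sum_(i < k) 2 <= d.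
    apply: leq_sum => i _; have := c0 i; have := H i; rewrite /=.
    by case: (c i) => [|[|n]].
  rewrite sum_nat_const card_ord d3E; move: k2; clear; lia.
have cSi : #|S :&: color_class col i0| == 2 by rewrite hS ci0 m2E.
have [x [b [xb Exb]]] := cards2P _ cSi.
have : x \in S :&: color_class col i0 by rewrite Exb !inE eqxx.
rewrite !inE => /andP [xS /eqP cx].
have : b \in S :&: color_class col i0 by rewrite Exb !inE eqxx orbT.
rewrite !inE => /andP [bS /eqP cb].
clear A AS aA cA eAB a aS.
have [A [AS xA cA]] := fair_piece c0 m0 hS xS.
have bA : b \notin A.
  apply/negP => bA.
  have : #|[set x; b]| <= #|A :&: color_class col i0|.
    apply: subset_leq_card; apply/subsetP => y; rewrite !inE.
    by case/orP => /eqP ->; rewrite ?xA ?bA ?cx ?cb eqxx.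
  by rewrite cards2 xb cA ci0.
set B := S :\: A.
have bB : b \in B by rewrite !inE bA bS.
set C := A :\ x.
set D := B :\ b.
set A' := b |: C.
have xC : x \notin C by rewrite !inE eqxx.
have bC : b \notin C by rewrite !inE (negbTE bA) andbF.
have AE : A = x |: C by rewrite setD1K.
have BE : B = b |: D by rewrite setD1K.
have A'S : A' \subset S.
  apply/subsetP => y; rewrite !inE => /orP [/eqP -> //|/andP [_ yA]].
  exact: (subsetP AS).
have cA' : forall i, #|A' :&: color_class col i| = c i.
  by move=> i; rewrite -cA AE !card_addI // !inE cx cb.
have B'E : S :\: A' = x |: D.
  apply/setP => y; rewrite !inE.
  case: (eqVneq y x) => [->|yx] /=; first by rewrite (negbTE xb) xS.
  by case: (y == b); case: (y \in A).
have h1 := contra A AS cA.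
have h2 := contra A' A'S cA'.
rewrite B'E in h2; rewrite -/B BE in h1.
have SE : S = (x |: C) :|: (b |: D).
  apply/setP => y; rewrite -AE -BE !inE; case yA: (y \in A) => //=.
  by rewrite (subsetP AS).
have cC : #|C| = 2.
  have := cardc A 1 (fun i => etrans (cA i) (esym (mul1n _))).
  rewrite AE cardsU1 xC d3E => H; move: H; clear; lia.
have cD : #|D| = 2.
  have cBd : forall i, #|B :&: color_class col i| = 1 * c i.
    by move=> i; rewrite /B cardD_cnt // hS cA m2E mul1n mulSn mul1n addnK.
  have := cardc B 1 cBd.
  rewrite BE cardsU1 !inE eqxx /= d3E => H; move: H; clear; lia.
have disj := disjP'.
have dxC : [disjoint [set x] & C] by apply: disj => y /set1P -> H; rewrite H in xC.
have dbD : [disjoint [set b] & D] by apply: disj => y /set1P -> H; move: H; rewrite !inE eqxx.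
have dbC : [disjoint [set b] & C] by apply: disj => y /set1P -> H; rewrite H in bC.
have dxD : [disjoint [set x] & D] by apply: disj => y /set1P -> H; move: H; rewrite !inE xA /= andbF.
have dCD : [disjoint C & D] by apply: disj => y; rewrite !inE => /andP [_ ->] /andP [_ /andP []].
have dAB : [disjoint x |: C & b |: D] by rewrite -AE -BE; apply: disj => y yA; rewrite !inE yA.
have fS := forest_bound sg fe S0.
have C0 : C :|: D != set0.
  apply/set0Pn; have /card_gt0P [y yC] : 0 < #|C| by rewrite cC.
  by exists y; rewrite inE yC.
have fCD := forest_bound sg fe C0.
have cCD : #|C :|: D| <= 4 by rewrite cardsU cC cD; clear; lia.
rewrite {1 2}SE ecount_sq // in fS.
rewrite AE in h1.
rewrite !(ecountUl _ _ dxC, ecountUl _ _ dbC, ecountUl _ _ dbD, ecountUl _ _ dxD,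
  ecountUr _ _ dxC, ecountUr _ _ dbC, ecountUr _ _ dbD, ecountUr _ _ dxD) in fS h1 h2.
rewrite ecount_sq // in fCD.
have s1 := ecountC [set x] C se. have s2 := ecountC [set x] D se.
have s3 := ecountC [set b] C se. have s4 := ecountC [set b] D se.
have s5 := ecountC [set x] [set b] se. have s6 := ecountC C D se.
have z1 := ecount_self1 x ie. have z2 := ecount_self1 b ie.
have o1 : ecount e [set x] [set b] <= 1 by rewrite ecount11; case: (e x b).
rewrite cS in fS.
move: fS h1 h2 fCD cCD s1 s2 s3 s4 s5 s6 z1 z2 o1.
move: (ecount e [set x] C) (ecount e C [set x]) (ecount e [set x] D) (ecount e D [set x])
  (ecount e [set b] C) (ecount e C [set b]) (ecount e [set b] D) (ecount e D [set b])
  (ecount e [set x] [set b]) (ecount e [set b] [set x]) (ecount e C D) (ecount e D C)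
  (ecount e [set x] [set x]) (ecount e [set b] [set b]) (ecount e C C) (ecount e D D)
  #|C :|: D|.
clear; lia.
Qed.
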